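(* Let $G$ be a simple loopless graph on $[L]$ and $p\ge1$. For every $(\pi,\phi)\in\Pi_{2p}(G)$, one has $\Phi_p(\pi,\phi)\in\mathcal{P}_{2p}(G)$.
   Context: $\mathcal{T}(G)=\langle v\in[L]: uv=vu \text{ for } (u,v)\in E(G)\rangle$ is the trace monoid of $G$, $e$ the empty word. Words $w_1,w_2\in\mathcal{T}(G)$ are adjacent, $w_1\leftrightarrow w_2$, if $w_1=vw_2$ or $w_2=vw_1$ for some letter $v\in[L]$. $\mathcal{P}_{2p}(G)=\{w\in\mathcal{T}(G)^{2p}: e\leftrightarrow w_1\leftrightarrow w_2\leftrightarrow\cdots\leftrightarrow w_{2p}=e\}$ (closed paths of length $2p$ from $e$ in the Cayley graph of $\mathcal{T}(G)$). $P_2(2p)$ is the set of pair partitions of $[2p]$; blocks $\{u_1,v_1\},\{u_2,v_2\}$ cross if $u_1<u_2<v_1<v_2$; $F_\pi$ is the graph on the blocks of $\pi$ with edges between crossing blocks. $\Pi_{2p}(G)=\{(\pi,\phi):\pi\in P_2(2p),\ \phi\in\operatorname{Hom}(F_\pi,G)\}$. Definition of $\Phi_p:\Pi_{2p}(G)\to\mathcal{T}(G)^{2p}$: (1) For $p=1$, if $\phi$ assigns label $i$ to the unique block $\{1,2\}$, $\Phi_1(\pi,\phi)=(i,e)$. (2) Given $\Phi_p$ and $(\pi,\phi)\in\Pi_{2(p+1)}(G)$, let $r$ be the smallest index that is the larger element of its block, $U=\{s,r\}\in\pi$ with $s<r$, $i_s=\phi(U)$, $\sigma=\pi\setminus\{U\}$,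 $\psi=\phi|_\sigma$. Identify $P_2([2(p+1)]\setminus\{s,r\})$ with $P_2(2p)$ via the order-preserving bijection, and write $u=\Phi_p(\sigma,\psi)=(u_k)_{k\in[2(p+1)]\setminus\{s,r\}}$; let $u_{k^-}$ be $u_j$ for the largest $j<k$, $j\notin\{s,r\}$, or $e$ if none exists. Then $\Phi_{p+1}(\pi,\phi)_k=u_k$ for $k<s$; $i_su_{s^-}$ for $k=s$; $i_su_k$ for $s<k<r$; $u_{r^-}$ for $k=r$; $u_k$ for $k>r$. *)

(* Defs.v *)
From mathcomp Require Import all_boot.
Set Implicit Arguments. Unset Strict Implicit. Unset Printing Implicit Defensive.

(* Convention: positions of [2p] are 0-indexed, i.e. {0,...,2p-1}
   (order-preserving shift of the paper's {1,...,2p}). *)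

Section TraceMonoid.
Variable L : nat.
Variable E : rel 'I_L.

(* Words over [L]; the trace monoid T(G) is seq 'I_L modulo teq, the
   congruence generated by u v = v u for (u,v) in E(G). *)
Inductive teq : seq 'I_L -> seq 'I_L -> Prop :=
| teq_refl w : teq w w
| teq_sym w1 w2 : teq w1 w2 -> teq w2 w1
| teq_trans w1 w2 w3 : teq w1 w2 -> teq w2 w3 -> teq w1 w3
| teq_swap (x y : seq 'I_L) (u v : 'I_L) :
    E u v -> teq (x ++ u :: v :: y) (x ++ v :: u :: y).

(* adjacency in the Cayley graph of T(G): w1 = v w2 or w2 = v w1 *)
Definition tadj (w1 w2 : seq 'I_L) : Prop :=
  exists v : 'I_L, teq w1 (v :: w2) \/ teq w2 (v :: w1).

(* w (given by representative words) is in P_{2p}(G):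
   e <-> w_1 <-> ... <-> w_{2p} = e  (in T(G)) *)
Definition in_paths (p : nat) (w : seq (seq 'I_L)) : Prop :=
  size w = (2 * p)%N /\
  (forall k, k < 2 * p -> tadj (nth [::] ([::] :: w) k) (nth [::] ([::] :: w) k.+1)) /\
  teq (nth [::] w (2 * p).-1) [::].

(* A labelled pair partition: list of blocks ((s, r), label) with s < r. *)
Definition lblock := (nat * nat * 'I_L)%type.

Definition is_pairpart (p : nat) (B : seq lblock) : bool :=
  all (fun b : lblock => b.1.1 < b.1.2) B &&
  perm_eq (flatten [seq [:: b.1.1; b.1.2] | b <- B]) (iota 0 (2 * p)).

Definition crossb (b c : lblock) : bool :=
  ((b.1.1 < c.1.1) && (c.1.1 < b.1.2) && (b.1.2 < c.1.2)) ||
  ((c.1.1 < b.1.1) && (b.1.1 < c.1.2) && (c.1.2 < b.1.2)).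

(* the labelling is a graph homomorphism F_pi -> G *)
Definition is_hom (B : seq lblock) : Prop :=
  forall b c, b \in B -> c \in B -> crossb b c -> E b.2 c.2.

(* order-preserving bijection [2(p+1)] \ {s,r} -> [2p] *)
Definition newidx (s r k : nat) : nat := k - (s < k) - (r < k).

Fixpoint Phi (n : nat) (B : seq lblock) {struct n} : seq (seq 'I_L) :=
  match n with
  | 0 => [::]
  | n'.+1 =>
    let rmin := foldr minn (2 * n) [seq b.1.2 | b <- B] in
    match [seq b <- B | b.1.2 == rmin] with
    | [::] => [::]
    | U :: _ =>
      let s := U.1.1 in let r := U.1.2 in let i := U.2 in
      if n' is 0 then [:: [:: i]; [::]] else
      let B' := [seq ((newidx s r b.1.1, newidx s r b.1.2), b.2)
                | b <- B & b != U] in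
      let u := Phi n' B' in
      let uat k := nth [::] u (newidx s r k) in
      let uminus k :=
        let J := [seq j <- iota 0 k | (j != s) && (j != r)] in
        if J is [::] then [::] else uat (last 0 J) in
      [seq (if k < s then uat k
            else if k == s then i :: uminus s
            else if k < r then i :: uat k
            else if k == r then uminus r
            else uat k) | k <- iota 0 (2 * n)]
    end
  end.

End TraceMonoid.

(* Main.v *)
Require Import Defs.
From mathcomp Require Import all_boot zify.
Set Implicit Arguments. Unset Strict Implicit. Unset Printing Implicit Defensive.

Section S.
Variable L : nat.
Variable E : rel 'I_L.

Lemma teq_cons i a b : teq E a b -> teq E (i :: a) (i :: b).
Proof.
elim=> [w|w1 w2 _ IH|w1 w2 w3 _ IH1 _ IH2|x y u v Huv].
- exact: teq_refl.
- exact: teq_sym.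
- exact: teq_trans IH1 IH2.
- exact: (@teq_swap L E (i :: x) y u v Huv).
Qed.

Definition W (w : seq (seq 'I_L)) k := nth [::] ([::] :: w) k.

Definition Inv p (B : seq (lblock L)) w :=
  [/\ size w = 2 * p, teq E (W w (2 * p)) [::] &
   forall b, b \in B -> teq E (W w b.1.1.+1) (b.2 :: W w b.1.1) /\
                        teq E (W w b.1.2) (b.2 :: W w b.1.2.+1)].

Definition ends (b : lblock L) x := (x == b.1.1) || (x == b.1.2).

Definition PP n (B : seq (lblock L)) :=
  [/\ forall b, b \in B -> b.1.1 < b.1.2,
      forall b, b \in B -> b.1.2 < n,
      forall k, k < n -> exists2 b, b \in B & ends b k &
      forall b c x, b \in B -> c \in B -> ends b x -> ends c x -> b = c].

Lemma uniq_flatten_disj (T S : eqType) (g : T -> seq S) (B : seq T) b c x :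
  uniq (flatten (map g B)) -> b \in B -> c \in B -> x \in g b -> x \in g c -> b = c.
Proof.
elim: B => [|a B IH] //= Hu. rewrite cat_uniq in Hu; case/and3P: Hu => _ Hna HuB.
rewrite !inE => /orP[/eqP->|bB] /orP[/eqP->|cB] // xb xc.
- by case/negP: Hna; apply/hasP; exists x => //; apply/flatten_mapP; exists c.
- by case/negP: Hna; apply/hasP; exists x => //; apply/flatten_mapP; exists b.
- exact: IH.
Qed.

Lemma pp_of p B : is_pairpart p B -> PP (2 * p) B.
Proof.
case/andP=> /allP Hlt Hperm.
have Hmem x : (x \in flatten [seq [:: b.1.1; b.1.2] | b <- B]) = (x < 2 * p).
  by rewrite (perm_mem Hperm) mem_iota.
have Hu : uniq (flatten [seq [:: b.1.1; b.1.2] | b <- B]).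
  by rewrite (perm_uniq Hperm) iota_uniq.
split.
- by move=> b /Hlt.
- move=> b bB; rewrite -Hmem; apply/flatten_mapP; exists b => //.
  by rewrite !inE eqxx orbT.
- move=> k; rewrite -Hmem => /flatten_mapP [b bB kb]; exists b => //.
  by move: kb; rewrite !inE.
- move=> b c x bB cB bx cx; apply: (uniq_flatten_disj (x := x) Hu bB cB).
  + by move: bx; rewrite !inE.
  + by move: cx; rewrite !inE.
Qed.

Lemma foldr_minn_le d (s : seq nat) y : y \in s -> foldr minn d s <= y.
Proof.
elim: s => //= a s IH; rewrite inE => /orP[/eqP->|/IH H]; first exact: geq_minl.
exact: leq_trans (geq_minr _ _) H.
Qed.

Lemma foldr_minn_mem d (s : seq nat) : foldr minn d s = d \/ foldr minn d s \in s.
Proof.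
elim: s => [|a s IH] /=; first by left.
rewrite inE; case: (leqP a (foldr minn d s)) => H.
- by right; rewrite eqxx.
- case: IH => [->|->]; first by left.
  by right; rewrite orbT.
Qed.


Definition uat (u: seq (seq 'I_L)) s r k := nth [::] u (newidx s r k).
Definition uminusJ u s r (J : seq nat) :=
  if J is [::] then [::] else uat u s r (last 0 J).
Definition uminus u s r k :=
  uminusJ u s r [seq j <- iota 0 k | (j != s) && (j != r)].
Definition PhiStep s r (i : 'I_L) u N :=
  [seq (if k < s then uat u s r k else if k == s then i :: uminus u s r s
        else if k < r then i :: uat u s r k else if k == r then uminus u s r r
        else uat u s r k) | k <- iota 0 N].

Definition Bp (U : lblock L) (B : seq (lblock L)) :=
  [seq ((newidx U.1.1 U.1.2 b.1.1, newidx U.1.1 U.1.2 b.1.2), b.2) | b <- B & b != U].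

Lemma Phi_unfold m (B : seq (lblock L)) U rest :
  [seq b <- B | b.1.2 == foldr minn (2 * m.+2) [seq b.1.2 | b <- B]] = U :: rest ->
  Phi m.+2 B = PhiStep U.1.1 U.1.2 U.2 (Phi m.+1 (Bp U B)) (2 * m.+2).
Proof. move=> H. rewrite [Phi m.+2 B]/= H. reflexivity. Qed.

Lemma filter_iotaS (P : pred nat) k :
  [seq j <- iota 0 k.+1 | P j] =
  if P k then rcons [seq j <- iota 0 k | P j] k else [seq j <- iota 0 k | P j].
Proof. by rewrite -addn1 iotaD add0n /= cats1 filter_rcons. Qed.

Lemma uminusE u s r k : s < r -> uminus u s r k = W u (newidx s r k).
Proof.
move=> Hsr; elim: k => [|k IH]; first by rewrite /uminus /= /W /newidx.
rewrite /uminus filter_iotaS; case: ifP => Hk.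
- have -> : newidx s r k.+1 = (newidx s r k).+1 by rewrite /newidx; lia.
  by case: [seq _ <- _ | _] => [|a J] //=; rewrite last_rcons.
- have -> : newidx s r k.+1 = newidx s r k by rewrite /newidx; lia.
  exact: IH.
Qed.

Section Step.
Variables (s r : nat) (i : 'I_L) (u : seq (seq 'I_L)) (N : nat).
Hypothesis Hsr : s < r.
Hypothesis HrN : r < N.
Let w := PhiStep s r i u N.

Lemma W_step k : k < N -> W w k.+1 =
  (if k < s then uat u s r k else if k == s then i :: uminus u s r s
        else if k < r then i :: uat u s r k else if k == r then uminus u s r r
        else uat u s r k).
Proof. by move=> Hk; rewrite /W /= /w /PhiStep (nth_map 0) ?size_iota // nth_iota. Qed.

Definition pre k := if (s < k) && (k < r) then [:: i] else [::].

Lemma uatW k : uat u s r k = W u (newidx s r k).+1.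
Proof. by []. Qed.

Ltac fin := move=> /=; first [ done | (exfalso; lia)
  | (congr (W u _); rewrite /newidx; lia)
  | (congr (_ :: W u _); rewrite /newidx; lia) ].

Lemma W_pre1 k : k < N -> k != s -> k != r ->
  W w k.+1 = pre k ++ W u (newidx s r k).+1.
Proof.
move=> HkN Hks Hkr; rewrite W_step // !uminusE // !uatW /pre.
by repeat case: ifP => ?; fin.
Qed.

Lemma W_pre0 k : k < N -> k != s -> k != r ->
  W w k = pre k ++ W u (newidx s r k).
Proof.
move=> HkN Hks Hkr; rewrite /pre; case: k HkN Hks Hkr => [|k] HkN Hks Hkr.
  by repeat case: ifP => ?; fin.
rewrite W_step; last by lia.
rewrite !uminusE // !uatW.
by repeat case: ifP => ?; fin.
Qed.

Lemma W_at_s : W w s = W u s.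
Proof.
have [Es|[s' Es]] : s = 0 \/ exists s', s = s'.+1.
  by case: (s) => [|s']; [left|right; exists s'].
  by rewrite Es.
rewrite Es W_step; last by lia.
rewrite !uminusE // !uatW.
by repeat case: ifP => ?; fin.
Qed.

Lemma W_at_r : W w r = i :: W u r.-1.
Proof.
have [r' Er] : exists r', r = r'.+1 by case: (r) Hsr => [|r'] //; exists r'.
rewrite Er /= W_step; last by lia.
rewrite !uminusE // !uatW.
by repeat case: ifP => ?; fin.
Qed.

Lemma W_at_r1 : W w r.+1 = W u r.-1.
Proof.
rewrite W_step // !uminusE // !uatW.
by repeat case: ifP => ?; fin.
Qed.



End Step.

Lemma notin_U n B U b : PP n B -> U \in B -> b \in B -> b != U ->
  ~~ ends U b.1.1 /\ ~~ ends U b.1.2.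
Proof.
case=> _ _ _ Hd UB bB bU; split; apply/negP => HU; move/eqP: bU; apply;
  apply: (Hd _ _ _ bB UB _ HU); by rewrite /ends eqxx ?orbT.
Qed.

Lemma step_inv m (B : seq (lblock L)) (s r : nat) (i : 'I_L) u :
  PP (2 * m.+2) B -> is_hom E B -> ((s, r), i) \in B ->
  (forall b, b \in B -> r <= b.1.2) ->
  Inv m.+1 (Bp ((s, r), i) B) u -> Inv m.+2 B (PhiStep s r i u (2 * m.+2)).
Proof.
move=> HPP Hhom UB Hmin [Hsz Hlast Hu].
have [Hlt Hbd _ _] := HPP.
have Hsr : s < r := Hlt _ UB.
have HrN : r < 2 * m.+2 := Hbd _ UB.
split.
- by rewrite size_map size_iota.
- have E1 : 2 * m.+2 = (2 * m + 3).+1 by lia.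
  rewrite E1; rewrite E1 in HrN.
  case: (eqVneq (2 * m + 3) r) => Hk.
  + subst r; rewrite (W_at_r1 i u Hsr HrN).
    by have -> : (2 * m + 3).-1 = 2 * m.+1 by lia.
  + have Hks : 2 * m + 3 != s by lia.
    rewrite (W_pre1 i u Hsr HrN (ltnSn _) Hks Hk) /pre.
    have -> : (s < 2 * m + 3) && (2 * m + 3 < r) = false by lia.
    by have -> : (newidx s r (2 * m + 3)).+1 = 2 * m.+1 by rewrite /newidx; lia.
- move=> b bB; case: (eqVneq b ((s, r), i)) => [->|bU] /=.
  + rewrite (W_at_s i u Hsr HrN) (W_at_r i u Hsr HrN) (W_at_r1 i u Hsr HrN).
    rewrite W_step //; last by lia.
    rewrite uminusE // ltnn eqxx.
    have -> : newidx s r s = s by rewrite /newidx; lia.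
    by split; apply: teq_refl.
  + have [/norP [/= Ha1 Ha2] /norP [/= Hc1 Hc2]] := notin_U HPP UB bB bU.
    have Hb' : ((newidx s r b.1.1, newidx s r b.1.2), b.2) \in Bp ((s, r), i) B.
      by apply/mapP; exists b => //; rewrite mem_filter bU bB.
    have [Hu1 Hu2] := Hu _ Hb'; rewrite /= in Hu1 Hu2.
    have Hab := Hlt _ bB; have HcN := Hbd _ bB; have Hrc := Hmin _ bB.
    have HaN : b.1.1 < 2 * m.+2 by lia.
    rewrite (W_pre1 i u Hsr HrN HaN Ha1 Ha2) (W_pre0 i u Hsr HrN HaN Ha1 Ha2).
    rewrite (W_pre1 i u Hsr HrN HcN Hc1 Hc2) (W_pre0 i u Hsr HrN HcN Hc1 Hc2).
    rewrite /pre.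
    have -> : (s < b.1.2) && (b.1.2 < r) = false by lia.
    split => //.
    case: ifP => Hcr //=.
    have HE : E i b.2.
      apply: (Hhom ((s, r), i) b UB bB); rewrite /crossb /=; set a := b.1.1 in Hcr *; set c := b.1.2 in Hc2 Hrc *; lia.
    apply: teq_trans (teq_cons i Hu1) _.
    exact: (@teq_swap L E [::] _ i b.2 HE).
Qed.


Ltac setp b := let a := fresh "a" in let c := fresh "c" in
  set a := b.1.1; set c := b.1.2.

Lemma notin_U' n B U b y : PP n B -> U \in B -> b \in B -> b != U ->
  ends b y -> ~~ ends U y.
Proof.
case=> _ _ _ Hd UB bB bU Hby; apply/negP => HU; move/eqP: bU; apply.
exact: (Hd _ _ _ bB UB Hby HU).
Qed.

Lemma newidx_surj s r n k : s < r -> r < n.+2 -> k < n ->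
  exists x, [/\ x < n.+2, x != s, x != r & newidx s r x = k].
Proof.
move=> Hsr HrN Hk; case: (ltnP k s) => h1.
  by exists k; split; rewrite /newidx; lia.
case: (ltnP k.+1 r) => h2.
  by exists k.+1; split; rewrite /newidx; lia.
by exists k.+2; split; rewrite /newidx; lia.
Qed.

Lemma ends_Bp s r (b : lblock L) x :
  ends ((newidx s r b.1.1, newidx s r b.1.2), b.2) x ->
  exists y, ends b y /\ x = newidx s r y.
Proof.
rewrite /ends /= => /orP[/eqP->|/eqP->]; [exists b.1.1 | exists b.1.2];
  by rewrite eqxx ?orbT.
Qed.

Lemma PP_Bp m (B : seq (lblock L)) (s r : nat) (i : 'I_L) : PP (2 * m.+2) B -> ((s, r), i) \in B ->
  (forall b, b \in B -> r <= b.1.2) -> PP (2 * m.+1) (Bp ((s, r), i) B).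
Proof.
move=> HPP UB Hmin; have [Hlt Hbd Hcov Hdisj] := HPP.
have Hsr : s < r := Hlt _ UB.
have HrN : r < 2 * m.+2 := Hbd _ UB.
split.
- move=> b' /mapP [b]; rewrite mem_filter => /andP [bU bB] -> /=.
  have [/norP [/= h1 h2] /norP [/= h3 h4]] := notin_U HPP UB bB bU.
  move: h1 h2 h3 h4 (Hlt _ bB); rewrite /newidx; setp b; lia.
- move=> b' /mapP [b]; rewrite mem_filter => /andP [bU bB] -> /=.
  have [/norP [/= h1 h2] /norP [/= h3 h4]] := notin_U HPP UB bB bU.
  move: h1 h2 h3 h4 (Hbd _ bB) (Hmin _ bB) HrN Hsr; rewrite /newidx; setp b; lia.
- move=> k Hk.
  have HrN' : r < (2 * m.+1).+2 by lia.
  have [x [HxN Hxs Hxr Hxk]] := newidx_surj Hsr HrN' Hk.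
  have HxN' : x < 2 * m.+2 by lia.
  have [b bB Hbx] := Hcov x HxN'.
  have bU : b != ((s, r), i).
    by apply/eqP => Eb; subst b; move: Hbx; rewrite /ends /=; lia.
  exists ((newidx s r b.1.1, newidx s r b.1.2), b.2).
    by apply/mapP; exists b => //; rewrite mem_filter bU bB.
  by rewrite -Hxk /ends /=; case/orP: Hbx => /eqP <-; rewrite eqxx ?orbT.
- move=> b' c' x /mapP [b]; rewrite mem_filter => /andP [bU bB] ->.
  move=> /mapP [c]; rewrite mem_filter => /andP [cU cB] ->.
  move=> /ends_Bp [y1 [Hy1 ->]] /ends_Bp [y2 [Hy2 Heq]].
  have /norP [h1 h2] := notin_U' HPP UB bB bU Hy1.
  have /norP [h3 h4] := notin_U' HPP UB cB cU Hy2.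
  have h1' : (y1 : nat) != s := h1. have h2' : (y1 : nat) != r := h2.
  have h3' : (y2 : nat) != s := h3. have h4' : (y2 : nat) != r := h4.
  have Heq' : newidx s r y1 = newidx s r y2 := Heq.
  have Ey : y1 = y2 by move: Heq' h1' h2' h3' h4' Hsr; rewrite /newidx; lia.
  subst y2; by rewrite (Hdisj _ _ _ bB cB Hy1 Hy2).
Qed.

Lemma newidx_ltE s r x y : s < r -> x != s -> x != r -> y != s -> y != r ->
  (newidx s r x < newidx s r y) = (x < y).
Proof. by move=> *; rewrite /newidx; apply/idP/idP; lia. Qed.

Lemma hom_Bp n B U : PP n B -> U \in B -> is_hom E B -> is_hom E (Bp U B).
Proof.
move=> HPP UB Hhom b' c' /mapP [b]; rewrite mem_filter => /andP [bU bB] ->.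
move=> /mapP [c]; rewrite mem_filter => /andP [cU cB] -> Hcr /=.
apply: (Hhom _ _ bB cB).
have [/norP [h1 h2] /norP [h3 h4]] := notin_U HPP UB bB bU.
have [/norP [h5 h6] /norP [h7 h8]] := notin_U HPP UB cB cU.
have Hsr := (let: And4 H _ _ _ := HPP in H) U UB.
move: Hcr; rewrite /crossb /=.
rewrite (newidx_ltE Hsr h1 h2 h5 h6) (newidx_ltE Hsr h5 h6 h3 h4) (newidx_ltE Hsr h3 h4 h7 h8).
by rewrite (newidx_ltE Hsr h5 h6 h1 h2) (newidx_ltE Hsr h1 h2 h7 h8) (newidx_ltE Hsr h7 h8 h3 h4).
Qed.

Lemma get_U n B : PP (2 * n.+1) B -> exists U rest,
  [seq b <- B | b.1.2 == foldr minn (2 * n.+1) [seq b.1.2 | b <- B]] = U :: rest /\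
  U \in B /\ forall b, b \in B -> U.1.2 <= b.1.2.
Proof.
case=> Hlt Hbd Hcov _.
have H0 : 0 < 2 * n.+1 by lia.
have [b0 b0B _] := Hcov 0 H0.
have HR : forall b, b \in B -> foldr minn (2 * n.+1) [seq b.1.2 | b <- B] <= b.1.2.
  by move=> b bB; apply: foldr_minn_le; apply: map_f.
have [c cB Hc] : exists2 c, c \in B &
    c.1.2 == foldr minn (2 * n.+1) [seq b.1.2 | b <- B].
  case: (foldr_minn_mem (2 * n.+1) [seq b.1.2 | b <- B]) => HRm.
    by exfalso; have := HR _ b0B; have := Hbd _ b0B; rewrite HRm; lia.
  by case/mapP: HRm => c cB Hc; exists c => //; rewrite -Hc.
case Ef: [seq b <- B | _] => [|U rest].
  have : c \in [seq b <- B | b.1.2 == foldr minn (2 * n.+1) [seq b.1.2 | b <- B]].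
    by rewrite mem_filter Hc cB.
  by rewrite Ef.
have : U \in [seq b <- B | b.1.2 == foldr minn (2 * n.+1) [seq b.1.2 | b <- B]].
  by rewrite Ef mem_head.
rewrite mem_filter => /andP [/eqP HU UB].
exists U, rest; split => //; split => // b bB; rewrite HU; exact: HR.
Qed.

Lemma main n : forall B, PP (2 * n.+1) B -> is_hom E B -> Inv n.+1 B (Phi n.+1 B).
Proof.
elim: n => [|m IH] B HPP Hhom; have [U [rest [Hf [UB Hmin]]]] := get_U HPP.
- have -> : Phi 1 B = [:: [:: U.2]; [::]] by rewrite [Phi 1 B]/= Hf.
  have [Hlt Hbd _ Hdisj] := HPP.
  split => //; first exact: teq_refl.
  move=> b bB.
  move: (Hdisj b U 0 bB UB) (Hlt _ bB) (Hbd _ bB) (Hlt _ UB) (Hbd _ UB).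
  case: b bB => [[x y] l] bB; case: U UB Hf Hmin => [[s r] i] UB _ _ /=.
  rewrite /ends /= => Hd h1 h2 h3 h4.
  have [Ex Ey] : x = 0 /\ y = 1 by lia.
  have [Es Er] : s = 0 /\ r = 1 by lia.
  subst x y s r; move/(_ isT isT): Hd => [->].
  by split; apply: teq_refl.
- rewrite (Phi_unfold Hf).
  move: Hf UB Hmin; case: U => [[s r] i] Hf UB Hmin /=.
  apply: step_inv => //.
  apply: IH; first exact: PP_Bp.
  exact: hom_Bp HPP UB Hhom.
Qed.

End S.

Theorem lemma3p2 (L : nat) (E : rel 'I_L) :
  symmetric E -> irreflexive E ->
  forall p : nat, 1 <= p ->
  forall B : seq (lblock L),
    is_pairpart p B -> is_hom E B ->
    in_paths E p (Phi p B).
Proof.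
move=> _ _ p Hp B Hpp Hhom.
case: p Hp Hpp => [//|n] _ Hpp.
have HPP := pp_of Hpp.
have [Hsz Hlast Hu] := main HPP Hhom.
have [_ _ Hcov _] := HPP.
split => //; split.
- move=> k Hk; have [b bB Hb] := Hcov k Hk; have [H1 H2] := Hu b bB.
  by case/orP: Hb => /eqP ->; exists b.2; [right | left].
- exact: Hlast.
Qed.
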